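(* Let $M(C,\bar\xi,\pi)$ be a Myller configuration with Darboux frame $(\bar\xi,\bar\mu,\bar v)$ and invariants $G,K,T$, with $(T,K)\neq(0,0)$ everywhere. Then: (i) if $K\equiv0$, $C$ is a $\bar v$-helix iff $\sigma_v=\mp G/T$ is constant; (ii) if $G\equiv0$, $C$ is a $\bar v$-helix iff $\sigma_v=\mp\dfrac{T'K-TK'}{(T^2+K^2)^{3/2}}$ is constant; (iii) if $T\equiv0$, $C$ is a $\bar v$-helix iff $\sigma_v=\mp G/K$ is constant.
   Context: Let $C$ be a smooth curve in $E^3$ parametrized by arclength $s$; primes denote $d/ds$. A Myller configuration $M(C,\bar\xi,\pi)$ consists of a smooth unit vector field $\bar\xi$ along $C$ and a smooth oriented plane field $\pi$ with $\bar\xi\in\pi$; $\bar v$ is the unit normal of $\pi$, $\bar\mu=\bar v\times\bar\xi$, and $\bar\xi'=G\bar\mu+K\bar v$, $\bar\mu'=-G\bar\xi+T\bar v$, $\bar v'=-K\bar\xi-T\bar\mu$. $C$ is a $\bar v$-helix if $\langle\bar v,\bar d_v\rangle$ is constant along $C$ for some constant unit vector $\bar d_v$. *)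

(* Defs.v *)
From Stdlib Require Import Reals.
From Coquelicot Require Import Coquelicot.
Open Scope R_scope.

Definition vec3 : Type := (R * R * R)%type.
Definition vx (u : vec3) : R := fst (fst u).
Definition vy (u : vec3) : R := snd (fst u).
Definition vz (u : vec3) : R := snd u.
Definition mkv (x y z : R) : vec3 := (x, y, z).

Definition dot (u w : vec3) : R := vx u * vx w + vy u * vy w + vz u * vz w.
Definition cross (u w : vec3) : vec3 :=
  mkv (vy u * vz w - vz u * vy w)
      (vz u * vx w - vx u * vz w)
      (vx u * vy w - vy u * vx w).
Definition vadd (u w : vec3) : vec3 := mkv (vx u + vx w) (vy u + vy w) (vz u + vz w).
Definition vscal (c : R) (u : vec3) : vec3 := mkv (c * vx u) (c * vy u) (c * vz u).

Definition smooth_on (a b : R) (f : R -> R) : Prop :=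
  forall (n : nat) (x : R), a < x < b -> ex_derive_n f n x.

Definition vsmooth_on (a b : R) (F : R -> vec3) : Prop :=
  smooth_on a b (fun t => vx (F t)) /\ smooth_on a b (fun t => vy (F t)) /\
  smooth_on a b (fun t => vz (F t)).

Definition vderiv_on (a b : R) (F DF : R -> vec3) : Prop :=
  forall s, a < s < b ->
    is_derive (fun t => vx (F t)) s (vx (DF s)) /\
    is_derive (fun t => vy (F t)) s (vy (DF s)) /\
    is_derive (fun t => vz (F t)) s (vz (DF s)).

(* Myller configuration M(C, xi, pi) along a curve parametrized by arclength
   s in the open interval (a,b): xi is a smooth unit vector field, v is the
   smooth unit normal of the smooth oriented plane field pi (so <xi,v> = 0),
   mu = v x xi, and (G,K,T) are the invariants in the Darboux-type equations
     xi' = G mu + K v,  mu' = -G xi + T v,  v' = -K xi - T mu. *)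
Definition darboux_mu (xi v : R -> vec3) : R -> vec3 := fun s => cross (v s) (xi s).

Definition Myller_config (a b : R) (xi v : R -> vec3) (G K T : R -> R) : Prop :=
  a < b /\
  vsmooth_on a b xi /\ vsmooth_on a b v /\
  smooth_on a b G /\ smooth_on a b K /\ smooth_on a b T /\
  (forall s, a < s < b ->
     dot (xi s) (xi s) = 1 /\ dot (v s) (v s) = 1 /\ dot (xi s) (v s) = 0) /\
  vderiv_on a b xi (fun s => vadd (vscal (G s) (darboux_mu xi v s)) (vscal (K s) (v s))) /\
  vderiv_on a b (darboux_mu xi v)
            (fun s => vadd (vscal (- G s) (xi s)) (vscal (T s) (v s))) /\
  vderiv_on a b v
            (fun s => vadd (vscal (- K s) (xi s)) (vscal (- T s) (darboux_mu xi v s))).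

Definition v_helix (a b : R) (v : R -> vec3) : Prop :=
  exists d : vec3, dot d d = 1 /\
    exists c : R, forall s, a < s < b -> dot (v s) d = c.

Definition const_on (a b : R) (f : R -> R) : Prop :=
  exists c : R, forall s, a < s < b -> f s = c.

(* Main.v *)
Require Import Defs.
From Stdlib Require Import Reals Lra Psatz.
From Coquelicot Require Import Coquelicot.
Open Scope R_scope.

Lemma d_plus (f g : R -> R) (x df dg : R) : is_derive f x df -> is_derive g x dg ->
  is_derive (fun t => f t + g t) x (df + dg).
Proof. intros H1 H2. exact (is_derive_plus f g x df dg H1 H2). Qed.
Lemma d_mult (f g : R -> R) (x df dg : R) : is_derive f x df -> is_derive g x dg ->
  is_derive (fun t => f t * g t) x (df * g x + f x * dg).
Proof. intros H1 H2. exact (is_derive_mult f g x df dg H1 H2 Rmult_comm). Qed.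
Lemma d_opp (f : R -> R) (x df : R) : is_derive f x df -> is_derive (fun t => - f t) x (- df).
Proof. intros H1. exact (is_derive_opp f x df H1). Qed.
Lemma d_const (c x : R) : is_derive (fun _ : R => c) x 0.
Proof. exact (is_derive_const c x). Qed.
Lemma d_eq (f : R -> R) (x l l' : R) : is_derive f x l -> l = l' -> is_derive f x l'.
Proof. intros H ->; exact H. Qed.

Lemma smooth_deriv a b f s : smooth_on a b f -> a < s < b -> is_derive f s (Derive f s).
Proof. intros H Hs. apply Derive_correct. exact (H 1%nat s Hs). Qed.

Lemma deriv0_const (a b : R) (f df : R -> R) : (forall s, a < s < b -> is_derive f s (df s)) ->
  (forall s, a < s < b -> df s = 0) ->
  forall s t, a < s < b -> a < t < b -> f s = f t.
Proof.
  intros H H0 s t Hs Ht.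
  assert (Hin : forall x, Rmin s t <= x <= Rmax s t -> a < x < b).
  { intros x [Hx1 Hx2]. split.
    - eapply Rlt_le_trans; [|exact Hx1]. apply Rmin_glb_lt; lra.
    - eapply Rle_lt_trans; [exact Hx2|]. apply Rmax_lub_lt; lra. }
  destruct (MVT_gen f s t (fun _ => 0)) as [c [_ Hc]].
  - intros x Hx. assert (Hx' : a < x < b) by (apply Hin; lra).
    rewrite <- (H0 x Hx'). apply H; auto.
  - intros x Hx. apply continuity_pt_filterlim. apply (ex_derive_continuous f x).
    exists (df x). apply H. apply Hin; auto.
  - lra.
Qed.

Lemma deriv_const_zero (a b : R) (f : R -> R) (c s D : R) : (forall t, a < t < b -> f t = c) -> a < s < b ->
  is_derive f s D -> D = 0.
Proof.
  intros Hc Hs HD.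
  assert (H2 : is_derive (fun _ => c) s D).
  { apply (is_derive_ext_loc f). 2: exact HD.
    apply (locally_interval _ s a b); simpl; try lra.
    intros y Hy1 Hy2. apply Hc. lra. }
  pose proof (is_derive_unique _ _ _ H2) as E1.
  pose proof (is_derive_unique _ _ _ (d_const c s)) as E2.
  rewrite <- E1. exact E2.
Qed.

Lemma vec_ext (u w : vec3) : vx u = vx w -> vy u = vy w -> vz u = vz w -> u = w.
Proof. destruct u as [[u1 u2] u3], w as [[w1 w2] w3]; unfold vx, vy, vz; simpl; intros; subst; reflexivity. Qed.

Ltac vsimp := unfold dot, cross, vadd, vscal, mkv, vx, vy, vz; simpl.

Lemma dot_comm u w : dot u w = dot w u.
Proof. vsimp; ring. Qed.

Definition comb (al be ga : R) (x y z : vec3) : vec3 :=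
  vadd (vadd (vscal al x) (vscal be y)) (vscal ga z).

Lemma comb_dot_l al be ga x y z w :
  dot (comb al be ga x y z) w = al * dot x w + be * dot y w + ga * dot z w.
Proof. unfold comb; vsimp; ring. Qed.
Lemma comb_dot_r al be ga x y z w :
  dot w (comb al be ga x y z) = al * dot w x + be * dot w y + ga * dot w z.
Proof. rewrite dot_comm, comb_dot_l, (dot_comm x), (dot_comm y), (dot_comm z). ring. Qed.

Lemma frame (x v d : vec3) : dot x x = 1 -> dot v v = 1 -> dot x v = 0 ->
  dot (cross v x) (cross v x) = 1 /\ dot x (cross v x) = 0 /\ dot v (cross v x) = 0 /\
  dot d d = dot x d ^ 2 + dot (cross v x) d ^ 2 + dot v d ^ 2.
Proof.
  intros H1 H2 H3.
  assert (E1 : dot (cross v x) (cross v x) = dot v v * dot x x - dot x v ^ 2)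
    by (destruct x as [[? ?] ?], v as [[? ?] ?]; vsimp; ring).
  assert (E2 : dot x (cross v x) = 0)
    by (destruct x as [[? ?] ?], v as [[? ?] ?]; vsimp; ring).
  assert (E3 : dot v (cross v x) = 0)
    by (destruct x as [[? ?] ?], v as [[? ?] ?]; vsimp; ring).
  assert (E4 : dot (cross v x) d ^ 2 =
     dot v v * (dot x x * dot d d - dot x d ^ 2)
     - dot x v * (dot x v * dot d d - dot x d * dot v d)
     + dot v d * (dot x v * dot x d - dot x x * dot v d))
    by (destruct x as [[? ?] ?], v as [[? ?] ?], d as [[? ?] ?]; vsimp; ring).
  rewrite H1, H2, H3 in *. repeat split; try lra.
  all: rewrite E4; ring.
Qed.

Lemma comb_facts (x v : vec3) al be ga : dot x x = 1 -> dot v v = 1 -> dot x v = 0 ->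
  dot (comb al be ga x (cross v x) v) (comb al be ga x (cross v x) v) = al^2 + be^2 + ga^2 /\
  dot v (comb al be ga x (cross v x) v) = ga.
Proof.
  intros H1 H2 H3. destruct (frame x v x H1 H2 H3) as [F1 [F2 [F3 _]]].
  rewrite comb_dot_l, !comb_dot_r. rewrite (dot_comm (cross v x) x), (dot_comm v x),
    (dot_comm (cross v x) v), (dot_comm v (cross v x)) in *.
  rewrite H1, H2, H3, F1, F2, F3. split; ring.
Qed.

Definition vder (F : R -> vec3) (s : R) (D : vec3) : Prop :=
  is_derive (fun t => vx (F t)) s (vx D) /\ is_derive (fun t => vy (F t)) s (vy D) /\
  is_derive (fun t => vz (F t)) s (vz D).

Lemma vder_add F H s D1 D2 : vder F s D1 -> vder H s D2 ->
  vder (fun t => vadd (F t) (H t)) s (vadd D1 D2).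
Proof. intros [A1 [A2 A3]] [B1 [B2 B3]]. unfold vder, vadd, mkv, vx, vy, vz in *; simpl in *.
  refine (conj _ (conj _ _)); apply d_plus; auto. Qed.

Lemma vder_scal (al : R -> R) al' F D s : is_derive al s al' -> vder F s D ->
  vder (fun t => vscal (al t) (F t)) s (vadd (vscal al' (F s)) (vscal (al s) D)).
Proof. intros Ha [A1 [A2 A3]]. unfold vder, vscal, vadd, mkv, vx, vy, vz in *; simpl in *.
  refine (conj _ (conj _ _)); apply d_mult; auto. Qed.

Lemma vder_comb al be ga al' be' ga' X Y Z X' Y' Z' s :
  is_derive al s al' -> is_derive be s be' -> is_derive ga s ga' ->
  vder X s X' -> vder Y s Y' -> vder Z s Z' ->
  vder (fun t => comb (al t) (be t) (ga t) (X t) (Y t) (Z t)) s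
    (vadd (vadd (vadd (vscal al' (X s)) (vscal (al s) X'))
                (vadd (vscal be' (Y s)) (vscal (be s) Y')))
          (vadd (vscal ga' (Z s)) (vscal (ga s) Z'))).
Proof.
  intros Ha Hb Hg HX HY HZ.
  exact (vder_add _ _ s _ _ (vder_add _ _ s _ _ (vder_scal al al' X X' s Ha HX)
     (vder_scal be be' Y Y' s Hb HY)) (vder_scal ga ga' Z Z' s Hg HZ)).
Qed.

Lemma vder_dot F D s d : vder F s D -> is_derive (fun t => dot (F t) d) s (dot D d).
Proof.
  intros [A1 [A2 A3]].
  pose proof (d_plus _ _ s _ _ (d_plus _ _ s _ _ (d_mult _ _ s _ _ A1 (d_const (vx d) s))
     (d_mult _ _ s _ _ A2 (d_const (vy d) s))) (d_mult _ _ s _ _ A3 (d_const (vz d) s))) as E.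
  simpl in E. eapply d_eq; [exact E| unfold dot; ring].
Qed.

Lemma vconst a b F : (forall s, a < s < b -> exists D, vder F s D /\ vx D = 0 /\ vy D = 0 /\ vz D = 0) ->
  forall s t, a < s < b -> a < t < b -> F s = F t.
Proof.
  intros H s t Hs Ht.
  assert (forall (pr : vec3 -> R), (pr = vx \/ pr = vy \/ pr = vz) ->
     pr (F s) = pr (F t)).
  { intros pr Hpr.
    apply (deriv0_const a b (fun t => pr (F t)) (fun _ => 0)); auto.
    intros u Hu. destruct (H u Hu) as [D [[A1 [A2 A3]] [Z1 [Z2 Z3]]]].
    destruct Hpr as [->|[->| ->]]; [rewrite <- Z1|rewrite <- Z2|rewrite <- Z3]; auto. }
  apply vec_ext; apply H0; auto.
Qed.

Lemma helix_of a b v : (exists D, 0 < dot D D /\ exists c, forall s, a < s < b -> dot (v s) D = c) ->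
  v_helix a b v.
Proof.
  intros [D [HD [c Hc]]].
  exists (vscal (/ sqrt (dot D D)) D). split.
  - assert (E : dot (vscal (/ sqrt (dot D D)) D) (vscal (/ sqrt (dot D D)) D)
                = (/ sqrt (dot D D))^2 * dot D D) by (vsimp; ring).
    rewrite E. rewrite <- Rinv_pow by (apply Rgt_not_eq, sqrt_lt_R0; auto).
    rewrite pow2_sqrt by lra. field. lra.
  - exists (/ sqrt (dot D D) * c). intros s Hs. rewrite <- (Hc s Hs). vsimp; ring.
Qed.

Lemma rpow32 x : 0 < x -> Rpower x (3 / 2) = x * sqrt x.
Proof.
  intros Hx. replace (3/2) with (1 + /2) by field.
  rewrite Rpower_plus, Rpower_1, Rpower_sqrt; auto.
Qed.

Lemma scal_derivs a b xi v G K T d s : Myller_config a b xi v G K T -> a < s < b ->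
  is_derive (fun t => dot (xi t) d) s (G s * dot (darboux_mu xi v s) d + K s * dot (v s) d) /\
  is_derive (fun t => dot (darboux_mu xi v t) d) s (- G s * dot (xi s) d + T s * dot (v s) d) /\
  is_derive (fun t => dot (v t) d) s (- K s * dot (xi s) d - T s * dot (darboux_mu xi v s) d).
Proof.
  intros Hm Hs. destruct Hm as [_ [_ [_ [_ [_ [_ [_ [Dxi [Dmu Dv]]]]]]]]].
  refine (conj _ (conj _ _)); eapply d_eq.
  1: apply vder_dot, Dxi, Hs.
  2: apply vder_dot, Dmu, Hs.
  3: apply vder_dot, Dv, Hs.
  all: vsimp; ring.
Qed.

Lemma frame_at a b xi v G K T s d : Myller_config a b xi v G K T -> a < s < b ->
  dot (darboux_mu xi v s) (darboux_mu xi v s) = 1 /\ dot (xi s) (darboux_mu xi v s) = 0 /\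
  dot (v s) (darboux_mu xi v s) = 0 /\
  dot d d = dot (xi s) d ^ 2 + dot (darboux_mu xi v s) d ^ 2 + dot (v s) d ^ 2.
Proof.
  intros Hm Hs. destruct Hm as [_ [_ [_ [_ [_ [_ [Ho _]]]]]]].
  destruct (Ho s Hs) as [H1 [H2 H3]]. exact (frame (xi s) (v s) d H1 H2 H3).
Qed.

Lemma case1 a b xi v G K T : Myller_config a b xi v G K T ->
  (forall s, a < s < b -> T s <> 0 \/ K s <> 0) ->
  (forall s, a < s < b -> K s = 0) ->
  (v_helix a b v <-> const_on a b (fun s => - (G s / T s))).
Proof.
  intros Hm Hnz HK0.
  pose proof Hm as [Hab [_ [_ [_ [_ [_ [Horth [Dxi [Dmu Dv]]]]]]]]].
  set (s0 := (a+b)/2). assert (Hs0 : a < s0 < b) by (unfold s0; lra).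
  assert (HT : forall s, a < s < b -> T s <> 0).
  { intros s Hs. destruct (Hnz s Hs) as [H|H]; [exact H|]. exfalso; apply H, HK0, Hs. }
  split.
  - intros [d [Hd [c Hc]]].
    pose proof (fun s Hs => scal_derivs a b xi v G K T d s Hm Hs) as SD.
    assert (Hq : forall s, a < s < b -> dot (darboux_mu xi v s) d = 0).
    { intros s Hs. destruct (SD s Hs) as [_ [_ H3]].
      pose proof (deriv_const_zero a b _ c s _ Hc Hs H3) as E.
      rewrite (HK0 s Hs) in E. assert (E2 : T s * dot (darboux_mu xi v s) d = 0) by lra.
      apply Rmult_integral in E2. destruct E2 as [E2|E2]; [exfalso; apply (HT s Hs E2)|exact E2]. }
    assert (Hqd : forall s, a < s < b -> - G s * dot (xi s) d + T s * c = 0).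
    { intros s Hs. destruct (SD s Hs) as [_ [H2 _]]. rewrite <- (Hc s Hs).
      exact (deriv_const_zero a b _ 0 s _ Hq Hs H2). }
    assert (Hp : forall s, a < s < b -> dot (xi s) d = dot (xi s0) d).
    { intros s Hs. apply (deriv0_const a b (fun t => dot (xi t) d) (fun s => G s * dot (darboux_mu xi v s) d + K s * dot (v s) d));
        auto.
      - intros u Hu. apply (SD u Hu).
      - intros u Hu. rewrite (Hq u Hu), (HK0 u Hu). ring. }
    assert (Hp0 : dot (xi s0) d <> 0).
    { intro E. pose proof (Hqd s0 Hs0) as E1. rewrite E in E1.
      assert (E2 : T s0 * c = 0) by lra. apply Rmult_integral in E2.
      destruct E2 as [E2|E2]; [exact (HT s0 Hs0 E2)|].
      destruct (frame_at a b xi v G K T s0 d Hm Hs0) as [_ [_ [_ F]]].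
      rewrite E, (Hq s0 Hs0), (Hc s0 Hs0), E2, Hd in F. lra. }
    exists (- (c / dot (xi s0) d)). intros s Hs.
    pose proof (Hqd s Hs) as E. rewrite (Hp s Hs) in E. pose proof (HT s Hs).
    f_equal. field_simplify_eq; auto. lra.
  - intros [k Hk]. set (m := - k).
    assert (HG : forall s, a < s < b -> G s = m * T s).
    { intros s Hs. pose proof (Hk s Hs) as E. pose proof (HT s Hs).
      replace (G s) with (G s / T s * T s) by (field; auto). unfold m. rewrite <- E. ring. }
    set (F := fun t => comb 1 0 m (xi t) (darboux_mu xi v t) (v t)).
    assert (HF : forall s, a < s < b -> F s = F s0).
    { intros s Hs. apply (vconst a b F); auto. intros u Hu.
      eexists. split.
      - apply (vder_comb (fun _ => 1) (fun _ => 0) (fun _ => m) 0 0 0); try apply d_const.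
        + apply Dxi, Hu. + apply Dmu, Hu. + apply Dv, Hu.
      - rewrite (HG u Hu), (HK0 u Hu). vsimp. refine (conj _ (conj _ _)); ring. }
    apply helix_of. exists (F s0).
    destruct (Horth s0 Hs0) as [O1 [O2 O3]].
    destruct (comb_facts (xi s0) (v s0) 1 0 m O1 O2 O3) as [N1 N2].
    split.
    + unfold F, darboux_mu. rewrite N1. nra.
    + exists m. intros s Hs. rewrite <- (HF s Hs).
      destruct (Horth s Hs) as [P1 [P2 P3]].
      destruct (comb_facts (xi s) (v s) 1 0 m P1 P2 P3) as [_ M2]. exact M2.
Qed.

Lemma case3 a b xi v G K T : Myller_config a b xi v G K T ->
  (forall s, a < s < b -> T s <> 0 \/ K s <> 0) ->
  (forall s, a < s < b -> T s = 0) ->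
  (v_helix a b v <-> const_on a b (fun s => - (G s / K s))).
Proof.
  intros Hm Hnz HT0.
  pose proof Hm as [Hab [_ [_ [_ [_ [_ [Horth [Dxi [Dmu Dv]]]]]]]]].
  set (s0 := (a+b)/2). assert (Hs0 : a < s0 < b) by (unfold s0; lra).
  assert (HK : forall s, a < s < b -> K s <> 0).
  { intros s Hs. destruct (Hnz s Hs) as [H|H]; [|exact H]. exfalso; apply H, HT0, Hs. }
  split.
  - intros [d [Hd [c Hc]]].
    pose proof (fun s Hs => scal_derivs a b xi v G K T d s Hm Hs) as SD.
    assert (Hp : forall s, a < s < b -> dot (xi s) d = 0).
    { intros s Hs. destruct (SD s Hs) as [_ [_ H3]].
      pose proof (deriv_const_zero a b _ c s _ Hc Hs H3) as E.
      rewrite (HT0 s Hs) in E. assert (E2 : K s * dot (xi s) d = 0) by lra.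
      apply Rmult_integral in E2. destruct E2 as [E2|E2]; [exfalso; apply (HK s Hs E2)|exact E2]. }
    assert (Hpd : forall s, a < s < b -> G s * dot (darboux_mu xi v s) d + K s * c = 0).
    { intros s Hs. destruct (SD s Hs) as [H1 _]. rewrite <- (Hc s Hs).
      exact (deriv_const_zero a b _ 0 s _ Hp Hs H1). }
    assert (Hq : forall s, a < s < b -> dot (darboux_mu xi v s) d = dot (darboux_mu xi v s0) d).
    { intros s Hs. apply (deriv0_const a b (fun t => dot (darboux_mu xi v t) d)
        (fun s => - G s * dot (xi s) d + T s * dot (v s) d)); auto.
      - intros u Hu. apply (SD u Hu).
      - intros u Hu. rewrite (Hp u Hu), (HT0 u Hu). ring. }
    assert (Hq0 : dot (darboux_mu xi v s0) d <> 0).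
    { intro E. pose proof (Hpd s0 Hs0) as E1. rewrite E in E1.
      assert (E2 : K s0 * c = 0) by lra. apply Rmult_integral in E2.
      destruct E2 as [E2|E2]; [exact (HK s0 Hs0 E2)|].
      destruct (frame_at a b xi v G K T s0 d Hm Hs0) as [_ [_ [_ F]]].
      rewrite E, (Hp s0 Hs0), (Hc s0 Hs0), E2, Hd in F. lra. }
    exists (c / dot (darboux_mu xi v s0) d). intros s Hs.
    pose proof (Hpd s Hs) as E. rewrite (Hq s Hs) in E. pose proof (HK s Hs).
    field_simplify_eq; auto. lra.
  - intros [k Hk]. set (m := - k).
    assert (HG : forall s, a < s < b -> G s = m * K s).
    { intros s Hs. pose proof (Hk s Hs) as E. pose proof (HK s Hs).
      replace (G s) with (G s / K s * K s) by (field; auto). unfold m. rewrite <- E. ring. }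
    set (F := fun t => comb 0 1 (-m) (xi t) (darboux_mu xi v t) (v t)).
    assert (HF : forall s, a < s < b -> F s = F s0).
    { intros s Hs. apply (vconst a b F); auto. intros u Hu.
      eexists. split.
      - apply (vder_comb (fun _ => 0) (fun _ => 1) (fun _ => -m) 0 0 0); try apply d_const.
        + apply Dxi, Hu. + apply Dmu, Hu. + apply Dv, Hu.
      - rewrite (HG u Hu), (HT0 u Hu). vsimp. refine (conj _ (conj _ _)); ring. }
    apply helix_of. exists (F s0).
    destruct (Horth s0 Hs0) as [O1 [O2 O3]].
    destruct (comb_facts (xi s0) (v s0) 0 1 (-m) O1 O2 O3) as [N1 N2].
    split.
    + unfold F, darboux_mu. rewrite N1. nra.
    + exists (-m). intros s Hs. rewrite <- (HF s Hs).
      destruct (Horth s Hs) as [P1 [P2 P3]].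
      destruct (comb_facts (xi s) (v s) 0 1 (-m) P1 P2 P3) as [_ M2]. exact M2.
Qed.

Lemma dP_lem (T K : R -> R) (s T' K' : R) : is_derive T s T' -> is_derive K s K' ->
  is_derive (fun t => T t ^ 2 + K t ^ 2) s (2 * T s * T' + 2 * K s * K').
Proof.
  intros HT HK.
  apply (is_derive_ext (fun t => T t * T t + K t * K t)). { intros t; simpl; ring. }
  eapply d_eq. { apply d_plus; apply d_mult; eauto. } ring.
Qed.

Lemma dalpha (T K : R -> R) (s T' K' : R) : is_derive T s T' -> is_derive K s K' ->
  0 < T s ^ 2 + K s ^ 2 ->
  is_derive (fun t => T t / sqrt (T t ^ 2 + K t ^ 2)) s
    (K s * (T' * K s - T s * K') / (sqrt (T s ^ 2 + K s ^ 2) ^ 3)).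
Proof.
  intros HT HK HP.
  pose proof (is_derive_sqrt _ s _ (dP_lem T K s T' K' HT HK) HP) as Hr.
  assert (Hr0 : sqrt (T s ^ 2 + K s ^ 2) <> 0) by (apply Rgt_not_eq, sqrt_lt_R0; auto).
  pose proof (is_derive_div T (fun t => sqrt (T t ^ 2 + K t ^ 2)) s _ _ HT Hr Hr0) as E.
  eapply d_eq. { exact E. }
  pose proof (sqrt_sqrt (T s ^ 2 + K s ^ 2) (Rlt_le _ _ HP)) as Hr2.
  set (r := sqrt (T s ^ 2 + K s ^ 2)) in *.
  apply Rminus_diag_uniq.
  replace (_ - _) with (T' * (r * r - (T s ^ 2 + K s ^ 2)) / r ^ 3) by (field; auto).
  rewrite Hr2. unfold Rdiv. ring.
Qed.

Lemma dbeta (T K : R -> R) (s T' K' : R) : is_derive T s T' -> is_derive K s K' ->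
  0 < T s ^ 2 + K s ^ 2 ->
  is_derive (fun t => - K t / sqrt (T t ^ 2 + K t ^ 2)) s
    (T s * (T' * K s - T s * K') / (sqrt (T s ^ 2 + K s ^ 2) ^ 3)).
Proof.
  intros HT HK HP.
  pose proof (is_derive_sqrt _ s _ (dP_lem T K s T' K' HT HK) HP) as Hr.
  assert (Hr0 : sqrt (T s ^ 2 + K s ^ 2) <> 0) by (apply Rgt_not_eq, sqrt_lt_R0; auto).
  pose proof (is_derive_div (fun t => - K t) (fun t => sqrt (T t ^ 2 + K t ^ 2)) s _ _ (d_opp _ _ _ HK) Hr Hr0) as E.
  eapply d_eq. { exact E. }
  pose proof (sqrt_sqrt (T s ^ 2 + K s ^ 2) (Rlt_le _ _ HP)) as Hr2.
  set (r := sqrt (T s ^ 2 + K s ^ 2)) in *.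
  apply Rminus_diag_uniq.
  replace (_ - _) with (- K' * (r * r - (T s ^ 2 + K s ^ 2)) / r ^ 3) by (field; auto).
  rewrite Hr2. unfold Rdiv. ring.
Qed.

Lemma case2 a b xi v G K T : Myller_config a b xi v G K T ->
  (forall s, a < s < b -> T s <> 0 \/ K s <> 0) ->
  (forall s, a < s < b -> G s = 0) ->
  (v_helix a b v <->
      const_on a b (fun s => - ((Derive T s * K s - T s * Derive K s)
                                / Rpower (T s ^ 2 + K s ^ 2) (3 / 2)))).
Proof.
  intros Hm Hnz HG0.
  pose proof Hm as [Hab [_ [_ [_ [SK [ST [Horth [Dxi [Dmu Dv]]]]]]]]].
  set (s0 := (a+b)/2). assert (Hs0 : a < s0 < b) by (unfold s0; lra).
  assert (HP : forall s, a < s < b -> 0 < T s ^ 2 + K s ^ 2).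
  { intros s Hs. destruct (Hnz s Hs) as [H|H].
    - pose proof (pow2_gt_0 _ H). pose proof (pow2_ge_0 (K s)). lra.
    - pose proof (pow2_gt_0 _ H). pose proof (pow2_ge_0 (T s)). lra. }
  assert (dT : forall s, a < s < b -> is_derive T s (Derive T s)) by (intros; apply (smooth_deriv a b); auto).
  assert (dK : forall s, a < s < b -> is_derive K s (Derive K s)) by (intros; apply (smooth_deriv a b); auto).
  assert (HR : forall s, a < s < b -> Rpower (T s ^ 2 + K s ^ 2) (3 / 2) =
                 (T s ^ 2 + K s ^ 2) * sqrt (T s ^ 2 + K s ^ 2)) by (intros; apply rpow32; auto).
  split.
  - intros [d [Hd [c Hc]]].
    pose proof (fun s Hs => scal_derivs a b xi v G K T d s Hm Hs) as SD.
    assert (HA : forall s, a < s < b -> K s * dot (xi s) d + T s * dot (darboux_mu xi v s) d = 0).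
    { intros s Hs. destruct (SD s Hs) as [_ [_ H3]].
      pose proof (deriv_const_zero a b _ c s _ Hc Hs H3) as E. lra. }
    assert (HB : forall s, a < s < b -> Derive K s * dot (xi s) d + Derive T s * dot (darboux_mu xi v s) d
                   + (T s ^ 2 + K s ^ 2) * c = 0).
    { intros s Hs. destruct (SD s Hs) as [H1 [H2 _]].
      pose proof (d_plus _ _ s _ _ (d_mult _ _ s _ _ (dK s Hs) H1) (d_mult _ _ s _ _ (dT s Hs) H2)) as D.
      pose proof (deriv_const_zero a b _ 0 s _ HA Hs D) as E.
      rewrite (Hc s Hs), (HG0 s Hs) in E. rewrite <- E. ring. }
    set (e := fun t => T t / sqrt (T t ^ 2 + K t ^ 2) * dot (xi t) d
                     + - K t / sqrt (T t ^ 2 + K t ^ 2) * dot (darboux_mu xi v t) d).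
    assert (He : forall s, a < s < b -> e s = e s0).
    { intros s Hs. apply (deriv0_const a b e (fun s =>
         (K s * (Derive T s * K s - T s * Derive K s) / (sqrt (T s ^ 2 + K s ^ 2) ^ 3) * dot (xi s) d
          + T s / sqrt (T s ^ 2 + K s ^ 2) * (G s * dot (darboux_mu xi v s) d + K s * dot (v s) d))
       + (T s * (Derive T s * K s - T s * Derive K s) / (sqrt (T s ^ 2 + K s ^ 2) ^ 3) * dot (darboux_mu xi v s) d
          + - K s / sqrt (T s ^ 2 + K s ^ 2) * (- G s * dot (xi s) d + T s * dot (v s) d)))); auto.
      - intros u Hu. destruct (SD u Hu) as [H1 [H2 _]]. unfold e.
        exact (d_plus _ _ u _ _ (d_mult _ _ u _ _ (dalpha T K u _ _ (dT u Hu) (dK u Hu) (HP u Hu)) H1)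
                 (d_mult _ _ u _ _ (dbeta T K u _ _ (dT u Hu) (dK u Hu) (HP u Hu)) H2)).
      - intros u Hu. pose proof (HA u Hu) as A. rewrite (HG0 u Hu).
        assert (Hr0 : sqrt (T u ^ 2 + K u ^ 2) <> 0) by (apply Rgt_not_eq, sqrt_lt_R0; auto).
        set (r := sqrt (T u ^ 2 + K u ^ 2)) in *.
        transitivity ((Derive T u * K u - T u * Derive K u) / r ^ 3 *
             (K u * dot (xi u) d + T u * dot (darboux_mu xi v u) d)).
        + field. auto.
        + rewrite A. ring. }
    assert (Hr0 : forall s, a < s < b -> sqrt (T s ^ 2 + K s ^ 2) <> 0)
      by (intros; apply Rgt_not_eq, sqrt_lt_R0; auto).
    assert (HeE : forall s, a < s < b -> e s * sqrt (T s ^ 2 + K s ^ 2) =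
               T s * dot (xi s) d - K s * dot (darboux_mu xi v s) d).
    { intros s Hs. unfold e. field. auto. }
    assert (He0 : e s0 <> 0).
    { intro E0. pose proof (HeE s0 Hs0) as E1. rewrite E0 in E1.
      pose proof (HA s0 Hs0) as A. pose proof (HB s0 Hs0) as B. pose proof (HP s0 Hs0) as P0.
      set (p := dot (xi s0) d) in *. set (q := dot (darboux_mu xi v s0) d) in *.
      assert (Hp : (T s0 ^ 2 + K s0 ^ 2) * p = 0).
      { transitivity (T s0 * (T s0 * p - K s0 * q) + K s0 * (K s0 * p + T s0 * q)); [ring|].
        rewrite A, <- E1. ring. }
      assert (Hq : (T s0 ^ 2 + K s0 ^ 2) * q = 0).
      { transitivity (- K s0 * (T s0 * p - K s0 * q) + T s0 * (K s0 * p + T s0 * q)); [ring|].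
        rewrite A, <- E1. ring. }
      apply Rmult_integral in Hp; destruct Hp as [Hp|Hp]; [lra|].
      apply Rmult_integral in Hq; destruct Hq as [Hq|Hq]; [lra|].
      rewrite Hp, Hq in B.
      assert (Hc0 : (T s0 ^ 2 + K s0 ^ 2) * c = 0) by lra.
      apply Rmult_integral in Hc0; destruct Hc0 as [Hc0|Hc0]; [lra|].
      destruct (frame_at a b xi v G K T s0 d Hm Hs0) as [_ [_ [_ F]]].
      fold p q in F. rewrite Hp, Hq, (Hc s0 Hs0), Hc0, Hd in F. lra. }
    exists (- (c / e s0)). intros s Hs. rewrite (HR s Hs). f_equal.
    rewrite <- (He s Hs). rewrite <- (He s Hs) in He0.
    pose proof (HA s Hs) as A. pose proof (HB s Hs) as B. pose proof (HeE s Hs) as E1.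
    pose proof (HP s Hs) as P0. pose proof (Hr0 s Hs) as R0.
    pose proof (sqrt_sqrt (T s ^ 2 + K s ^ 2) (Rlt_le _ _ P0)) as Hr2.
    set (p := dot (xi s) d) in *. set (q := dot (darboux_mu xi v s) d) in *.
    assert (Key : (Derive T s * K s - T s * Derive K s) * (T s * p - K s * q)
                  = (T s ^ 2 + K s ^ 2) * (T s ^ 2 + K s ^ 2) * c).
    { transitivity ((T s ^ 2 + K s ^ 2) * (T s ^ 2 + K s ^ 2) * c
         - (T s ^ 2 + K s ^ 2) * (Derive K s * p + Derive T s * q + (T s ^ 2 + K s ^ 2) * c)
         + (T s * Derive T s + K s * Derive K s) * (K s * p + T s * q)); [ring|].
      rewrite A, B. ring. }
    set (r := sqrt (T s ^ 2 + K s ^ 2)) in *.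
    rewrite <- E1 in Key.
    set (es := e s) in *.
    set (P := T s ^ 2 + K s ^ 2) in *.
    assert (HP0 : P <> 0) by lra.
    apply (Rmult_eq_reg_r (P * r * es)). 2: { repeat apply Rmult_integral_contrapositive_currified; auto. }
    transitivity ((Derive T s * K s - T s * Derive K s) * (es * r) / r). { field. auto. }
    rewrite Key. rewrite <- Hr2. field. auto.
  - intros [k Hk]. set (m := - k).
    assert (Hr0 : forall s, a < s < b -> sqrt (T s ^ 2 + K s ^ 2) <> 0)
      by (intros; apply Rgt_not_eq, sqrt_lt_R0; auto).
    assert (HS : forall s, a < s < b -> Derive T s * K s - T s * Derive K s =
       m * (sqrt (T s ^ 2 + K s ^ 2) * sqrt (T s ^ 2 + K s ^ 2)) * sqrt (T s ^ 2 + K s ^ 2)).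
    { intros s Hs. pose proof (Hk s Hs) as E. rewrite (HR s Hs) in E.
      pose proof (HP s Hs) as P0. pose proof (Hr0 s Hs) as R0.
      pose proof (sqrt_sqrt (T s ^ 2 + K s ^ 2) (Rlt_le _ _ P0)) as Hr2.
      set (r := sqrt (T s ^ 2 + K s ^ 2)) in *. rewrite Hr2. unfold m. rewrite <- E.
      field. split; auto. lra. }
    set (F := fun t => comb (T t / sqrt (T t ^ 2 + K t ^ 2)) (- K t / sqrt (T t ^ 2 + K t ^ 2)) m
                  (xi t) (darboux_mu xi v t) (v t)).
    assert (HF : forall s, a < s < b -> F s = F s0).
    { intros s Hs. apply (vconst a b F); auto. intros u Hu.
      eexists. split.
      - apply (vder_comb (fun t => T t / sqrt (T t ^ 2 + K t ^ 2))
                         (fun t => - K t / sqrt (T t ^ 2 + K t ^ 2)) (fun _ => m)).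
        + apply dalpha; auto. + apply dbeta; auto. + apply d_const.
        + apply Dxi, Hu. + apply Dmu, Hu. + apply Dv, Hu.
      - rewrite (HG0 u Hu), (HS u Hu). pose proof (Hr0 u Hu) as R0.
        set (r := sqrt (T u ^ 2 + K u ^ 2)) in *.
        vsimp. refine (conj _ (conj _ _)); field; auto. }
    apply helix_of. exists (F s0).
    destruct (Horth s0 Hs0) as [O1 [O2 O3]].
    destruct (comb_facts (xi s0) (v s0) (T s0 / sqrt (T s0 ^ 2 + K s0 ^ 2))
       (- K s0 / sqrt (T s0 ^ 2 + K s0 ^ 2)) m O1 O2 O3) as [N1 N2].
    split.
    + unfold F, darboux_mu. rewrite N1.
      pose proof (HP s0 Hs0) as P0. pose proof (Hr0 s0 Hs0) as R0.
      pose proof (sqrt_sqrt (T s0 ^ 2 + K s0 ^ 2) (Rlt_le _ _ P0)) as Hr2.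
      set (r := sqrt (T s0 ^ 2 + K s0 ^ 2)) in *.
      assert (E : (T s0 / r) ^ 2 + (- K s0 / r) ^ 2 = 1).
      { transitivity ((T s0 ^ 2 + K s0 ^ 2) / (r * r)). { field; auto. }
        rewrite <- Hr2. field. auto. }
      nra.
    + exists m. intros s Hs. rewrite <- (HF s Hs).
      destruct (Horth s Hs) as [P1 [P2 P3]].
      destruct (comb_facts (xi s) (v s) (T s / sqrt (T s ^ 2 + K s ^ 2))
         (- K s / sqrt (T s ^ 2 + K s ^ 2)) m P1 P2 P3) as [_ M2]. exact M2.
Qed.

Theorem corollary26 (a b : R) (xi v : R -> vec3) (G K T : R -> R) :
  Myller_config a b xi v G K T ->
  (forall s, a < s < b -> T s <> 0 \/ K s <> 0) ->
  ((forall s, a < s < b -> K s = 0) ->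
     (v_helix a b v <-> const_on a b (fun s => - (G s / T s)))) /\
  ((forall s, a < s < b -> G s = 0) ->
     (v_helix a b v <->
      const_on a b (fun s => - ((Derive T s * K s - T s * Derive K s)
                                / Rpower (T s ^ 2 + K s ^ 2) (3 / 2))))) /\
  ((forall s, a < s < b -> T s = 0) ->
     (v_helix a b v <-> const_on a b (fun s => - (G s / K s)))).
Proof.
  intros Hm Hnz. split; [|split].
  - exact (case1 a b xi v G K T Hm Hnz).
  - exact (case2 a b xi v G K T Hm Hnz).
  - exact (case3 a b xi v G K T Hm Hnz).
Qed.
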